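(* Let $N>0$, $\beta>0$, $0<\rho<1$, $\sigma>0$, $\gamma>0$ and $0\le\pi_1\le\pi_2\le 1$ be constants, and let $\Delta_1,\Delta_2:[0,\infty)\to[0,\infty)$ be continuous with $\Delta_i(t)\to0$ as $t\to+\infty$ ($i=1,2$). Write $q(t)=\Delta_1(t)\pi_1+\Delta_2(t)(\pi_2-\pi_1)$ and consider $$S'=-\tfrac{\beta}{N}S(1-\rho)I-\tfrac{S}{N}q(t),\quad E'=\tfrac{\beta}{N}S(1-\rho)I-\sigma E,\quad I'=\sigma E-\gamma I,\quad R'=\gamma I,\quad V'=\tfrac{S}{N}q(t),$$ with initial data $S_0,E_0,I_0,R_0,V_0\ge 0$ satisfying $S_0+E_0+I_0+R_0+V_0=N$. Then the solution $(S,E,I,R,V)(t)$ converges as $t\to+\infty$ to a fixed point of the limit system $$S'=-\tfrac{\beta}{N}S(1-\rho)I,\quad E'=\tfrac{\beta}{N}S(1-\rho)I-\sigma E,\quad I'=\sigma E-\gamma I,\quad R'=\gamma I,\quad V'=0,$$ i.e. to a point of the form $(S_\infty,0,0,N-S_\infty-V_\infty,V_\infty)$ with $S_\infty,V_\infty\ge0$, $S_\infty+V_\infty\le N$.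
   Context: SEIR epidemic model with vaccination: $S$ susceptible, $E$ exposed, $I$ infected, $R$ removed, $V$ vaccine-immunized individuals in a population of constant size $N$; $\Delta_1,\Delta_2$ are daily numbers of first and second doses, $\pi_1,\pi_2$ immunity fractions after each dose. $R_0$ denotes the initial value of $R$. *)

(* Defs.v *)
From Stdlib Require Import Reals.
From Coquelicot Require Import Coquelicot.
Open Scope R_scope.

Definition vacc_rate (D1 D2 : R -> R) (pi1 pi2 t : R) : R :=
  D1 t * pi1 + D2 t * (pi2 - pi1).

Definition cont_on_nonneg (f : R -> R) : Prop :=
  forall t, 0 <= t -> filterlim f (within (fun x => 0 <= x) (locally t)) (locally (f t)).

(* Main.v *)
Require Import Defs.
From Stdlib Require Import Reals Lra Classical.
From Coquelicot Require Import Coquelicot.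
Open Scope R_scope.

Lemma cont_eps (f : R -> R) t : cont_on_nonneg f -> 0 <= t ->
  forall eps, 0 < eps -> exists d, 0 < d /\
    forall x, 0 <= x -> Rabs (x - t) < d -> Rabs (f x - f t) < eps.
Proof.
  intros Hf Ht eps He.
  destruct (proj1 (filterlim_locally _ _) (Hf t Ht) (mkposreal eps He)) as [d Hd].
  exists d; split; [apply cond_pos|].
  intros x Hx Hxt. apply (Hd x); auto.
Qed.

Lemma cont_ext (f : R -> R) t : cont_on_nonneg f -> 0 <= t ->
  continuity_pt (fun x => f (Rmax 0 x)) t.
Proof.
  intros Hf Ht eps He.
  destruct (cont_eps f t Hf Ht eps He) as [d [Hd H]].
  exists d; split; auto.
  intros x [_ Hx]. simpl in *. unfold R_dist in *.
  rewrite (Rmax_right 0 t Ht).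
  apply H. apply Rmax_l.
  unfold Rmax; destruct (Rle_dec 0 x); [auto|].
  revert Hx; unfold Rabs; repeat destruct Rcase_abs; lra.
Qed.

Lemma deriv_cont (f : R -> R) t l : is_derive f t l -> continuity_pt f t.
Proof.
  intros H. apply continuity_pt_filterlim.
  apply (ex_derive_continuous (V:=R_NormedModule)). exists l; auto.
Qed.

Lemma cont_plus (f g : R -> R) : cont_on_nonneg f -> cont_on_nonneg g ->
  cont_on_nonneg (fun x => f x + g x).
Proof.
  intros Hf Hg t Ht.
  eapply filterlim_comp_2; [apply Hf; auto | apply Hg; auto | ].
  apply (filterlim_plus (f t) (g t)).
Qed.

Lemma mvt0 (f df : R -> R) a b : cont_on_nonneg f ->
  (forall x, 0 < x -> is_derive f x (df x)) -> 0 <= a < b ->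
  exists c, a < c < b /\ f b - f a = df c * (b - a).
Proof.
  intros Hf Hd Hab.
  set (g := fun x => f (Rmax 0 x)).
  assert (Hg : forall c, a < c < b -> is_derive g c (df c)).
  { intros x Hx.
    apply is_derive_ext_loc with f; [|apply Hd; lra].
    exists (mkposreal x ltac:(lra)). intros y Hy. unfold g.
    rewrite Rmax_right; auto.
    revert Hy; unfold ball; simpl; unfold AbsRing_ball, abs, minus, plus, opp; simpl.
    unfold Rabs; destruct Rcase_abs; lra. }
  assert (pr1 : forall c, a < c < b -> derivable_pt g c).
  { intros c Hc. exists (df c). apply is_derive_Reals, Hg; auto. }
  destruct (MVT g id a b pr1 (fun c _ => derivable_pt_id c)) as [c [P Heq]].
  - lra.
  - intros x Hx. apply cont_ext; auto; lra.
  - intros x Hx. apply derivable_continuous_pt, derivable_pt_id.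
  - rewrite derive_pt_id in Heq.
    rewrite (derive_pt_eq_0 g c (df c)) in Heq by (apply is_derive_Reals, Hg; auto).
    exists c; split; auto. unfold g, id in Heq.
    rewrite !Rmax_right in Heq by lra. lra.
Qed.

Lemma mono0 (f df : R -> R) : cont_on_nonneg f ->
  (forall x, 0 < x -> is_derive f x (df x)) -> (forall x, 0 < x -> 0 <= df x) ->
  forall a b, 0 <= a <= b -> f a <= f b.
Proof.
  intros Hf Hd Hp a b Hab.
  destruct (Req_dec a b) as [->|Hne]; [lra|].
  destruct (mvt0 f df a b Hf Hd) as [c [Hc Heq]]; [lra|].
  assert (0 <= df c * (b - a)) by (apply Rmult_le_pos; [apply Hp|]; lra). lra.
Qed.

Lemma const0 (f df : R -> R) : cont_on_nonneg f ->
  (forall x, 0 < x -> is_derive f x (df x)) -> (forall x, 0 < x -> df x = 0) ->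
  forall b, 0 <= b -> f b = f 0.
Proof.
  intros Hf Hd Hp b Hb.
  destruct (Req_dec 0 b) as [<-|Hne]; [lra|].
  destruct (mvt0 f df 0 b Hf Hd) as [c [Hc Heq]]; [lra|].
  rewrite Hp in Heq by lra. lra.
Qed.


Lemma bound_abs (f : R -> R) T : cont_on_nonneg f -> 0 <= T ->
  exists M, forall t, 0 <= t <= T -> Rabs (f t) <= M.
Proof.
  intros Hf HT.
  destruct (continuity_ab_maj (fun x => Rabs (f (Rmax 0 x))) 0 T HT) as [m [Hm _]].
  - intros c Hc.
    apply (continuity_pt_comp (fun x => f (Rmax 0 x)) Rabs).
    + apply cont_ext; auto; lra.
    + apply Rcontinuity_abs.
  - exists (Rabs (f (Rmax 0 m))). intros t Ht.
    specialize (Hm t Ht). simpl in Hm. rewrite Rmax_right in Hm by lra. auto.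
Qed.

Lemma deriv_left (f : R -> R) x d : is_derive f x d -> 0 < d ->
  forall r, 0 < r -> exists s, x - r < s < x /\ f s < f x.
Proof.
  intros H Hd r Hr.
  apply is_derive_Reals in H.
  destruct (H (d/2) ltac:(lra)) as [del Hdel].
  set (h := - Rmin (del/2) (r/2)).
  assert (Hh1 : h < 0) by (unfold h; assert (0 < Rmin (del/2) (r/2)) by (apply Rmin_pos; pose proof (cond_pos del); lra); lra).
  assert (Hh2 : Rabs h < del).
  { unfold h. rewrite Rabs_Ropp, Rabs_right.
    - pose proof (Rmin_l (del/2) (r/2)); pose proof (cond_pos del); lra.
    - left; apply Rmin_pos; pose proof (cond_pos del); lra. }
  specialize (Hdel h ltac:(lra) Hh2).
  exists (x + h). split.
  - unfold h in *. pose proof (Rmin_r (del/2) (r/2)). lra.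
  - assert (Hq : (f (x + h) - f x) / h > 0).
    { revert Hdel. unfold Rabs; destruct Rcase_abs; lra. }
    assert (Hq2 : f (x + h) - f x < 0).
    { destruct (Rlt_le_dec (f (x + h) - f x) 0); auto.
      exfalso. assert ((f (x + h) - f x) / h <= 0); [|lra].
      unfold Rdiv. assert (/ h < 0) by (apply Rinv_lt_0_compat; auto). nra. }
    lra.
Qed.

Lemma cont_sign (h : R -> R) x : continuity_pt h x -> h x <> 0 ->
  exists d, 0 < d /\ forall y, Rabs (y - x) < d -> h y * h x > 0.
Proof.
  intros Hc Hn.
  destruct (Hc (Rabs (h x)) (Rabs_pos_lt _ Hn)) as [d [Hd H]].
  exists d; split; auto. intros y Hy.
  destruct (Req_dec y x) as [->|Hne].
  - pose proof (Rsqr_pos_lt _ Hn). unfold Rsqr in *. lra.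
  - specialize (H y (conj (conj I (not_eq_sym Hne)) Hy)). simpl in H. unfold R_dist in H.
    revert H; unfold Rabs; repeat destruct Rcase_abs; intros; nra.
Qed.


Lemma pos2 (f g df dg : R -> R) T :
  (exists d, 0 < d /\ forall x, 0 <= x < d -> 0 < f x /\ 0 < g x) ->
  (forall t, 0 < t -> is_derive f t (df t)) ->
  (forall t, 0 < t -> is_derive g t (dg t)) ->
  (forall t, 0 < t <= T -> f t = 0 -> 0 <= g t -> 0 < df t) ->
  (forall t, 0 < t <= T -> g t = 0 -> 0 <= f t -> 0 < dg t) ->
  forall t, 0 <= t <= T -> 0 < f t /\ 0 < g t.
Proof.
  intros [d0 [Hd0 H0]] Hdf Hdg Hf Hg t1 Ht1.
  destruct (classic (0 < f t1 /\ 0 < g t1)) as [OK|NOK]; [exact OK|exfalso].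
  set (A := fun x => 0 <= x <= t1 /\ forall s, 0 <= s <= x -> 0 < f s /\ 0 < g s).
  assert (HA0 : A 0).
  { split; [lra|]. intros s Hs. apply H0. lra. }
  destruct (completeness A) as [tau [Hub Hlub]].
  { exists t1. intros x [Hx _]. lra. }
  { exists 0; auto. }
  assert (Ht0 : 0 <= tau) by (apply Hub; auto).
  assert (Htt : tau <= t1) by (apply Hlub; intros x [Hx _]; lra).
  assert (Hi : forall s, 0 <= s < tau -> 0 < f s /\ 0 < g s).
  { intros s Hs. destruct (classic (0 < f s /\ 0 < g s)) as [OK|NO]; auto.
    exfalso. assert (tau <= s); [|lra].
    apply Hlub. intros x [Hx Hx2].
    destruct (Rle_lt_dec x s); auto. exfalso. apply NO, Hx2. lra. }
  assert (Hcf : 0 < tau -> continuity_pt f tau) by (intros; eapply deriv_cont, Hdf; auto).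
  assert (Hcg : 0 < tau -> continuity_pt g tau) by (intros; eapply deriv_cont, Hdg; auto).
  destruct (Rlt_le_dec 0 (f tau)) as [Fp|Fn]; destruct (Rlt_le_dec 0 (g tau)) as [Gp|Gn].
  -
    assert (Hlt : tau < t1).
    { destruct (Req_dec tau t1) as [E|E]; [subst; tauto| lra]. }
    assert (Hloc : exists d, 0 < d /\ forall x, tau <= x < tau + d -> 0 < f x /\ 0 < g x).
    { destruct (Req_dec tau 0) as [E|E].
      - exists d0; split; auto. intros x Hx. apply H0. lra.
      - destruct (cont_sign f tau) as [d1 [Hd1 H1]]; [apply Hcf; lra| lra |].
        destruct (cont_sign g tau) as [d2 [Hd2 H2]]; [apply Hcg; lra| lra |].
        exists (Rmin d1 d2); split; [apply Rmin_pos; auto|].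
        intros x Hx. pose proof (Rmin_l d1 d2). pose proof (Rmin_r d1 d2).
        assert (Rabs (x - tau) < d1) by (rewrite Rabs_right; lra).
        assert (Rabs (x - tau) < d2) by (rewrite Rabs_right; lra).
        specialize (H1 x ltac:(auto)). specialize (H2 x ltac:(auto)). split; nra. }
    destruct Hloc as [d [Hd Hloc]].
    set (x := Rmin (tau + d/2) t1).
    assert (Hx1 : x <= tau + d/2) by apply Rmin_l.
    assert (Hx2 : x <= t1) by apply Rmin_r.
    assert (Hx3 : tau < x) by (unfold x; apply Rmin_glb_lt; lra).
    assert (A x).
    { split; [lra|]. intros s Hs.
      destruct (Rlt_le_dec s tau); [apply Hi; lra| apply Hloc; lra]. }
    assert (x <= tau) by (apply Hub; auto). lra.
  -
    assert (Htp : 0 < tau).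
    { destruct (Req_dec tau 0) as [E|E]; [|lra]. rewrite E in Gn.
      assert (0 < g 0) by (apply H0; lra). lra. }
    destruct (Req_dec (g tau) 0) as [Gz|Gz].
    + assert (Hd : 0 < dg tau) by (apply Hg; auto; lra).
      destruct (deriv_left g tau (dg tau) (Hdg tau Htp) Hd tau Htp) as [s [Hs Hgs]].
      assert (0 < g s) by (apply Hi; lra). lra.
    + destruct (cont_sign g tau) as [d1 [Hd1 H1]]; [apply Hcg; lra| auto |].
      set (s := tau - Rmin d1 tau / 2).
      assert (0 < Rmin d1 tau) by (apply Rmin_pos; auto).
      pose proof (Rmin_l d1 tau). pose proof (Rmin_r d1 tau).
      assert (Rabs (s - tau) < d1) by (unfold s; rewrite Rabs_left; lra).
      specialize (H1 s ltac:(auto)).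
      assert (0 < g s) by (apply Hi; unfold s; lra). nra.
  -
    assert (Htp : 0 < tau).
    { destruct (Req_dec tau 0) as [E|E]; [|lra]. rewrite E in Fn.
      assert (0 < f 0) by (apply H0; lra). lra. }
    destruct (Req_dec (f tau) 0) as [Fz|Fz].
    + assert (Hd : 0 < df tau) by (apply Hf; auto; lra).
      destruct (deriv_left f tau (df tau) (Hdf tau Htp) Hd tau Htp) as [s [Hs Hfs]].
      assert (0 < f s) by (apply Hi; lra). lra.
    + destruct (cont_sign f tau) as [d1 [Hd1 H1]]; [apply Hcf; lra| auto |].
      set (s := tau - Rmin d1 tau / 2).
      assert (0 < Rmin d1 tau) by (apply Rmin_pos; auto).
      pose proof (Rmin_l d1 tau). pose proof (Rmin_r d1 tau).
      assert (Rabs (s - tau) < d1) by (unfold s; rewrite Rabs_left; lra).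
      specialize (H1 s ltac:(auto)).
      assert (0 < f s) by (apply Hi; unfold s; lra). nra.
  -
    assert (Htp : 0 < tau).
    { destruct (Req_dec tau 0) as [E|E]; [|lra]. rewrite E in Fn.
      assert (0 < f 0) by (apply H0; lra). lra. }
    destruct (Req_dec (f tau) 0) as [Fz|Fz].
    + destruct (Req_dec (g tau) 0) as [Gz|Gz].
      * assert (Hd : 0 < df tau) by (apply Hf; auto; lra).
        destruct (deriv_left f tau (df tau) (Hdf tau Htp) Hd tau Htp) as [s [Hs Hfs]].
        assert (0 < f s) by (apply Hi; lra). lra.
      * destruct (cont_sign g tau) as [d1 [Hd1 H1]]; [apply Hcg; lra| auto |].
        set (s := tau - Rmin d1 tau / 2).
        assert (0 < Rmin d1 tau) by (apply Rmin_pos; auto).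
        pose proof (Rmin_l d1 tau). pose proof (Rmin_r d1 tau).
        assert (Rabs (s - tau) < d1) by (unfold s; rewrite Rabs_left; lra).
        specialize (H1 s ltac:(auto)).
        assert (0 < g s) by (apply Hi; unfold s; lra). nra.
    + destruct (cont_sign f tau) as [d1 [Hd1 H1]]; [apply Hcf; lra| auto |].
      set (s := tau - Rmin d1 tau / 2).
      assert (0 < Rmin d1 tau) by (apply Rmin_pos; auto).
      pose proof (Rmin_l d1 tau). pose proof (Rmin_r d1 tau).
      assert (Rabs (s - tau) < d1) by (unfold s; rewrite Rabs_left; lra).
      specialize (H1 s ltac:(auto)).
      assert (0 < f s) by (apply Hi; unfold s; lra). nra.
Qed.


Lemma mono_lim (f : R -> R) B :
  (forall x y, 0 <= x <= y -> f x <= f y) -> (forall t, 0 <= t -> f t <= B) ->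
  exists L : R, is_lim f p_infty L /\ L <= B /\ forall t, 0 <= t -> f t <= L.
Proof.
  intros Hm Hb.
  set (A := fun y => exists t, 0 <= t /\ y = f t).
  destruct (completeness A) as [L [Hub Hlub]].
  { exists B. intros y [t [Ht ->]]. auto. }
  { exists (f 0), 0. split; auto; lra. }
  exists L. split; [|split].
  - apply is_lim_spec. simpl. intros eps.
    destruct (classic (exists t0, 0 <= t0 /\ L - eps < f t0)) as [[t0 [Ht0 Hf0]]|NO].
    + exists t0. intros x Hx.
      assert (f t0 <= f x) by (apply Hm; lra).
      assert (f x <= L) by (apply Hub; exists x; split; auto; lra).
      rewrite Rabs_left1 by lra. lra.
    + exfalso. assert (L <= L - eps); [|pose proof (cond_pos eps); lra].
      apply Hlub. intros y [t [Ht ->]].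
      destruct (Rle_lt_dec (f t) (L - eps)); auto. exfalso; apply NO; exists t; auto.
  - apply Hlub. intros y [t [Ht ->]]. auto.
  - intros t Ht. apply Hub. exists t; auto.
Qed.


Lemma eps_nonneg x K : 0 < K -> (forall e, 0 < e -> 0 < x + e * K) -> 0 <= x.
Proof.
  intros HK H. destruct (Rle_lt_dec 0 x) as [|Hx]; auto.
  specialize (H (- x / (2 * K))).
  assert (Hv : - x / (2 * K) * K = - x / 2) by (field; lra).
  rewrite Hv in H. assert (0 < - x / (2 * K)).
  { apply Rdiv_lt_0_compat; lra. }
  specialize (H H0). lra.
Qed.

Lemma init_pos (f : R -> R) lam e : cont_on_nonneg f -> 0 <= f 0 -> 0 <= lam -> 0 < e ->
  exists d, 0 < d /\ forall x, 0 <= x < d -> 0 < f x + e * exp (lam * x).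
Proof.
  intros Hf H0 Hl He.
  destruct (cont_eps f 0 Hf (Rle_refl 0) e He) as [d [Hd H]].
  exists d; split; auto. intros x Hx.
  specialize (H x ltac:(lra) ltac:(rewrite Rminus_0_r, Rabs_right; lra)).
  assert (1 <= exp (lam * x)).
  { pose proof (exp_ineq1_le (lam * x)). assert (0 <= lam * x) by nra. lra. }
  revert H; unfold Rabs; destruct Rcase_abs; intros; nra.
Qed.

Lemma deriv_pert (f : R -> R) df lam e t : is_derive f t df ->
  is_derive (fun s => f s + e * exp (lam * s)) t (df + e * (lam * exp (lam * t))).
Proof.
  intros H. apply (is_derive_plus f (fun s => e * exp (lam * s))); auto.
  auto_derive; auto. ring.
Qed.

Lemma mvtp (f df : R -> R) a b :
  (forall x, 0 < x -> is_derive f x (df x)) -> 0 < a < b ->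
  exists c, a <= c <= b /\ f b - f a = df c * (b - a).
Proof.
  intros Hd Hab.
  destruct (MVT_gen f a b df) as [c [Hc Heq]].
  - intros x Hx. rewrite Rmin_left in Hx by lra. apply Hd. lra.
  - intros x Hx. rewrite Rmin_left in Hx by lra. eapply deriv_cont, Hd. lra.
  - rewrite Rmin_left, Rmax_right in Hc by lra. exists c; auto.
Qed.


Theorem mainTheorem2
  (N beta rho sigma gamma pi1 pi2 : R) (D1 D2 : R -> R)
  (S E I Rm V : R -> R) (S0 E0 I0 R0 V0 : R) :
  0 < N -> 0 < beta -> 0 < rho -> rho < 1 -> 0 < sigma -> 0 < gamma ->
  0 <= pi1 -> pi1 <= pi2 -> pi2 <= 1 ->
  cont_on_nonneg D1 -> cont_on_nonneg D2 ->
  (forall t, 0 <= t -> 0 <= D1 t) -> (forall t, 0 <= t -> 0 <= D2 t) ->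
  is_lim D1 p_infty 0 -> is_lim D2 p_infty 0 ->
  0 <= S0 -> 0 <= E0 -> 0 <= I0 -> 0 <= R0 -> 0 <= V0 ->
  S0 + E0 + I0 + R0 + V0 = N ->
  S 0 = S0 -> E 0 = E0 -> I 0 = I0 -> Rm 0 = R0 -> V 0 = V0 ->
  cont_on_nonneg S -> cont_on_nonneg E -> cont_on_nonneg I ->
  cont_on_nonneg Rm -> cont_on_nonneg V ->
  (forall t, 0 < t ->
     is_derive S t (- (beta / N) * S t * (1 - rho) * I t
                    - S t / N * vacc_rate D1 D2 pi1 pi2 t)) ->
  (forall t, 0 < t ->
     is_derive E t ((beta / N) * S t * (1 - rho) * I t - sigma * E t)) ->
  (forall t, 0 < t -> is_derive I t (sigma * E t - gamma * I t)) ->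
  (forall t, 0 < t -> is_derive Rm t (gamma * I t)) ->
  (forall t, 0 < t -> is_derive V t (S t / N * vacc_rate D1 D2 pi1 pi2 t)) ->
  exists Sinf Vinf : R,
    0 <= Sinf /\ 0 <= Vinf /\ Sinf + Vinf <= N /\
    is_lim S p_infty Sinf /\ is_lim E p_infty 0 /\ is_lim I p_infty 0 /\
    is_lim Rm p_infty (N - Sinf - Vinf) /\ is_lim V p_infty Vinf.
Proof.
  intros HN Hb Hr1 Hr2 Hs Hg Hp1 Hp12 Hp2 CD1 CD2 PD1 PD2 _ _ HS0 HE0 HI0 HR0 HV0 Hsum
    ES EE EI ER EV CS CE CI CR CV DS DE DI DR DV.
  set (q := vacc_rate D1 D2 pi1 pi2) in *.
  assert (Hq : forall t, 0 <= t -> 0 <= q t).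
  { intros t Ht. unfold q, vacc_rate.
    pose proof (PD1 t Ht); pose proof (PD2 t Ht). nra. }
  set (c := beta / N * (1 - rho)).
  assert (Hc : 0 < c).
  { unfold c. apply Rmult_lt_0_compat; [apply Rdiv_lt_0_compat|]; lra. }
  assert (PS : forall t, 0 <= t -> 0 <= S t).
  { intros t Ht.
    destruct (bound_abs I t CI Ht) as [MI HMI].
    assert (HMI0 : 0 <= MI) by (specialize (HMI 0 ltac:(lra)); pose proof (Rabs_pos (I 0)); lra).
    set (lam := c * MI + 1).
    assert (Hlam : 0 < lam) by (unfold lam; nra).
    apply (eps_nonneg _ (exp (lam * t))); [apply exp_pos|].
    intros e He.
    set (f := fun s => S s + e * exp (lam * s)).
    assert (Hpos : forall s, 0 <= s <= t -> 0 < f s /\ 0 < f s).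
    { apply (pos2 f f
        (fun s => (- (beta / N) * S s * (1 - rho) * I s - S s / N * q s) + e * (lam * exp (lam * s)))
        (fun s => (- (beta / N) * S s * (1 - rho) * I s - S s / N * q s) + e * (lam * exp (lam * s)))
        t).
      - destruct (init_pos S lam e CS ltac:(lra) ltac:(lra) He) as [d [Hd H]].
        exists d; split; auto. intros x Hx; split; apply H; auto.
      - intros s Hs0. apply deriv_pert, DS; auto.
      - intros s Hs0. apply deriv_pert, DS; auto.
      - intros s Hs0 Hf0 _. unfold f in Hf0.
        assert (HSs : S s = - (e * exp (lam * s))) by lra.
        assert (HIs : - MI <= I s).
        { specialize (HMI s ltac:(lra)). revert HMI; unfold Rabs; destruct Rcase_abs; lra. }
        assert (Hqs := Hq s ltac:(lra)).
        assert (Hex := exp_pos (lam * s)).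
        assert (Heq : - (beta / N) * S s * (1 - rho) * I s - S s / N * q s + e * (lam * exp (lam * s))
                  = e * exp (lam * s) * (c * I s + q s / N + lam)).
        { rewrite HSs. unfold c. field. lra. }
        rewrite Heq. apply Rmult_lt_0_compat; [apply Rmult_lt_0_compat; auto|].
        assert (0 <= q s / N) by (apply Rdiv_le_0_compat; lra).
        unfold lam. nra.
      - intros s Hs0 Hf0 _. unfold f in Hf0.
        assert (HSs : S s = - (e * exp (lam * s))) by lra.
        assert (HIs : - MI <= I s).
        { specialize (HMI s ltac:(lra)). revert HMI; unfold Rabs; destruct Rcase_abs; lra. }
        assert (Hqs := Hq s ltac:(lra)).
        assert (Hex := exp_pos (lam * s)).
        assert (Heq : - (beta / N) * S s * (1 - rho) * I s - S s / N * q s + e * (lam * exp (lam * s))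
                  = e * exp (lam * s) * (c * I s + q s / N + lam)).
        { rewrite HSs. unfold c. field. lra. }
        rewrite Heq. apply Rmult_lt_0_compat; [apply Rmult_lt_0_compat; auto|].
        assert (0 <= q s / N) by (apply Rdiv_le_0_compat; lra).
        unfold lam. nra. }
    destruct (Hpos t ltac:(lra)) as [H _]. unfold f in H. lra. }
  assert (PEI : forall t, 0 <= t -> 0 <= E t /\ 0 <= I t).
  { intros t Ht.
    destruct (bound_abs S t CS Ht) as [MS HMS].
    assert (HMS0 : 0 <= MS) by (specialize (HMS 0 ltac:(lra)); pose proof (Rabs_pos (S 0)); lra).
    set (lam := c * MS + sigma + 1).
    assert (Hlam : 0 < lam) by (unfold lam; nra).
    assert (Hpos : forall e, 0 < e -> forall s, 0 <= s <= t ->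
       0 < E s + e * exp (lam * s) /\ 0 < I s + e * exp (lam * s)).
    { intros e He.
      apply (pos2 (fun s => E s + e * exp (lam * s)) (fun s => I s + e * exp (lam * s))
        (fun s => ((beta / N) * S s * (1 - rho) * I s - sigma * E s) + e * (lam * exp (lam * s)))
        (fun s => (sigma * E s - gamma * I s) + e * (lam * exp (lam * s)))
        t).
      - destruct (init_pos E lam e CE ltac:(lra) ltac:(lra) He) as [d1 [Hd1 H1]].
        destruct (init_pos I lam e CI ltac:(lra) ltac:(lra) He) as [d2 [Hd2 H2]].
        exists (Rmin d1 d2); split; [apply Rmin_pos; auto|].
        pose proof (Rmin_l d1 d2); pose proof (Rmin_r d1 d2).
        intros x Hx; split; [apply H1|apply H2]; lra.
      - intros s Hs0. apply deriv_pert, DE; auto.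
      - intros s Hs0. apply deriv_pert, DI; auto.
      - intros s Hs0 Hf0 Hg0.
        assert (HEs : E s = - (e * exp (lam * s))) by lra.
        assert (HSs : S s <= MS).
        { specialize (HMS s ltac:(lra)). revert HMS; unfold Rabs; destruct Rcase_abs; lra. }
        assert (HS0s := PS s ltac:(lra)).
        assert (Hex := exp_pos (lam * s)).
        set (w := e * exp (lam * s)) in *.
        assert (Hw : 0 < w) by (unfold w; apply Rmult_lt_0_compat; auto).
        assert (Heq : beta / N * S s * (1 - rho) * I s - sigma * E s + e * (lam * exp (lam * s))
                  = c * S s * I s + w * (sigma + lam)).
        { rewrite HEs. unfold c, w. field. lra. }
        rewrite Heq.
        assert (H1 : c * S s * I s >= - (c * MS * w)).
        { assert (c * S s * (I s + w) >= 0).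
          { apply Rle_ge, Rmult_le_pos; [apply Rmult_le_pos|]; lra. }
          assert (c * S s * w <= c * MS * w).
          { apply Rmult_le_compat_r; [lra|]. apply Rmult_le_compat_l; lra. }
          nra. }
        unfold lam in *. nra.
      - intros s Hs0 Hg0 Hf0.
        assert (HIs : I s = - (e * exp (lam * s))) by lra.
        assert (Hex := exp_pos (lam * s)).
        set (w := e * exp (lam * s)) in *.
        assert (Hw : 0 < w) by (unfold w; apply Rmult_lt_0_compat; auto).
        assert (Heq : sigma * E s - gamma * I s + e * (lam * exp (lam * s))
                  = sigma * (E s + w) + w * (gamma + lam - sigma)).
        { rewrite HIs. unfold w. ring. }
        rewrite Heq.
        assert (0 <= sigma * (E s + w)) by (apply Rmult_le_pos; lra).
        assert (0 < w * (gamma + lam - sigma)) by (apply Rmult_lt_0_compat; unfold lam; nra).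
        lra. }
    split.
    - apply (eps_nonneg _ (exp (lam * t))); [apply exp_pos|].
      intros e He. apply (Hpos e He t). lra.
    - apply (eps_nonneg _ (exp (lam * t))); [apply exp_pos|].
      intros e He. apply (Hpos e He t). lra. }
  assert (Htot : forall t, 0 <= t -> S t + E t + I t + Rm t + V t = N).
  { intros t Ht.
    assert (Ct : cont_on_nonneg (fun x => S x + E x + I x + Rm x + V x)).
    { repeat apply cont_plus; auto. }
    assert (Dt : forall x, 0 < x -> is_derive (fun x => S x + E x + I x + Rm x + V x) x ((fun _ => 0) x)).
    { intros x Hx.
      replace ((fun _ : R => 0) x) with (((((- (beta / N) * S x * (1 - rho) * I x - S x / N * q x)
                     + ((beta / N) * S x * (1 - rho) * I x - sigma * E x))
                     + (sigma * E x - gamma * I x)) + gamma * I x) + S x / N * q x)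
        by (simpl; field; lra).
      idtac.
      apply (is_derive_plus (fun x => S x + E x + I x + Rm x) V); [|apply DV; auto].
      apply (is_derive_plus (fun x => S x + E x + I x) Rm); [|apply DR; auto].
      apply (is_derive_plus (fun x => S x + E x) I); [|apply DI; auto].
      apply (is_derive_plus S E); [apply DS; auto|apply DE; auto]. }
    rewrite (const0 _ (fun _ => 0) Ct Dt (fun _ _ => eq_refl) t Ht).
    rewrite ES, EE, EI, ER, EV. auto. }
  assert (MR : forall a b, 0 <= a <= b -> Rm a <= Rm b).
  { apply (mono0 Rm (fun t => gamma * I t) CR DR).
    intros x Hx. apply Rmult_le_pos; [lra|]. apply PEI; lra. }
  assert (MV : forall a b, 0 <= a <= b -> V a <= V b).
  { apply (mono0 V (fun t => S t / N * q t) CV DV).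
    intros x Hx. apply Rmult_le_pos; [apply Rdiv_le_0_compat; [apply PS|]; lra| apply Hq; lra]. }
  assert (MS : forall a b, 0 <= a <= b -> S b <= S a).
  { intros a b Hab. destruct (Req_dec a b) as [->|Hne]; [lra|].
    destruct (mvt0 S _ a b CS DS) as [x [Hx Heq]]; [lra|].
    assert (0 <= beta / N * S x * (1 - rho) * I x + S x / N * q x).
    { assert (0 <= S x) by (apply PS; lra). assert (0 <= I x) by (apply PEI; lra).
      assert (0 <= q x) by (apply Hq; lra).
      apply Rplus_le_le_0_compat.
      - assert (0 <= beta / N) by (apply Rdiv_le_0_compat; lra).
        assert (0 <= beta / N * S x) by (apply Rmult_le_pos; lra).
        assert (0 <= beta / N * S x * (1 - rho)) by (apply Rmult_le_pos; lra).
        apply Rmult_le_pos; lra.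
      - apply Rmult_le_pos; auto. apply Rdiv_le_0_compat; lra. }
    assert (0 <= (beta / N * S x * (1 - rho) * I x + S x / N * q x) * (b - a)) by (apply Rmult_le_pos; lra).
    lra. }
  assert (PR : forall t, 0 <= t -> R0 <= Rm t) by (intros t Ht; rewrite <- ER; apply MR; lra).
  assert (PV : forall t, 0 <= t -> V0 <= V t) by (intros t Ht; rewrite <- EV; apply MV; lra).
  assert (BR : forall t, 0 <= t -> Rm t <= N).
  { intros t Ht. pose proof (Htot t Ht). pose proof (PS t Ht). pose proof (PEI t Ht). pose proof (PV t Ht). lra. }
  assert (BV : forall t, 0 <= t -> V t <= N).
  { intros t Ht. pose proof (Htot t Ht). pose proof (PS t Ht). pose proof (PEI t Ht). pose proof (PR t Ht). lra. }
  assert (BI : forall t, 0 <= t -> I t <= N).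
  { intros t Ht. pose proof (Htot t Ht). pose proof (PS t Ht). pose proof (PEI t Ht). pose proof (PR t Ht). pose proof (PV t Ht). lra. }
  destruct (mono_lim Rm N MR BR) as [Rinf [LR [_ HRinf]]].
  destruct (mono_lim V N MV BV) as [Vinf [LV [_ HVinf]]].
  destruct (mono_lim (fun t => - S t) 0) as [Sm [LS [HSm _]]].
  { intros a b Hab. pose proof (MS a b Hab). lra. }
  { intros t Ht. pose proof (PS t Ht). lra. }
  assert (LS' : is_lim S p_infty (- Sm)).
  { apply (is_lim_ext (fun y => - - S y)); [intros; ring|]. apply (is_lim_opp (fun t => - S t) p_infty Sm). exact LS. }
  set (L := N - (- Sm) - Rinf - Vinf).
  assert (LEI : is_lim (fun t => E t + I t) p_infty L).
  { apply (is_lim_ext_loc (fun t => N - S t - Rm t - V t)).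
    { exists 0. intros y Hy. pose proof (Htot y ltac:(lra)). lra. }
    apply is_lim_minus'; [apply is_lim_minus'; [apply is_lim_minus'|]|]; auto.
    apply is_lim_const. }
  apply is_lim_spec in LEI. simpl in LEI.
  assert (HL : L = 0).
  { destruct (Rtotal_order L 0) as [Hneg|[Hz|Hpos]]; auto; exfalso.
    - destruct (LEI (mkposreal (- L) ltac:(lra))) as [M HM].
      set (x := Rmax M 0 + 1).
      assert (M < x) by (unfold x; pose proof (Rmax_l M 0); lra).
      assert (0 <= x) by (unfold x; pose proof (Rmax_r M 0); lra).
      specialize (HM x ltac:(auto)). simpl in HM.
      pose proof (PEI x ltac:(auto)).
      revert HM; unfold Rabs; destruct Rcase_abs; lra.
    - destruct (LEI (mkposreal (L / 2) ltac:(lra))) as [M HM]. simpl in HM.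
      set (G := fun t => / sigma * I t + (gamma + sigma) / (sigma * gamma) * Rm t).
      assert (DG : forall x, 0 < x -> is_derive G x (E x + I x)).
      { intros x Hx. unfold G.
        replace (E x + I x) with (/ sigma * (sigma * E x - gamma * I x) + (gamma + sigma) / (sigma * gamma) * (gamma * I x))
          by (field; lra).
        apply (is_derive_plus (fun t => / sigma * I t) (fun t => (gamma + sigma) / (sigma * gamma) * Rm t)).
        - apply (is_derive_scal I). apply DI; auto.
        - apply (is_derive_scal Rm). apply DR; auto. }
      set (B := / sigma * N + (gamma + sigma) / (sigma * gamma) * N).
      assert (HB : forall t, 0 <= t -> 0 <= G t <= B).
      { intros t Ht. unfold G, B.
        assert (0 < (gamma + sigma) / (sigma * gamma)) by (apply Rdiv_lt_0_compat; nra).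
        pose proof (PEI t Ht). pose proof (PR t Ht). pose proof (BR t Ht). pose proof (BI t Ht).
        split.
        - apply Rplus_le_le_0_compat; [apply Rmult_le_pos; [left; apply Rinv_0_lt_compat|]; lra| apply Rmult_le_pos; lra].
        - apply Rplus_le_compat; [apply Rmult_le_compat_l; [left; apply Rinv_0_lt_compat|]; lra|
            apply Rmult_le_compat_l; lra]. }
      assert (HB0 : 0 <= B) by (destruct (HB 0 ltac:(lra)); lra).
      set (t1 := Rmax M 0 + 1).
      assert (M < t1) by (unfold t1; pose proof (Rmax_l M 0); lra).
      assert (0 < t1) by (unfold t1; pose proof (Rmax_r M 0); lra).
      set (t2 := t1 + 2 * B / L + 1).
      assert (0 <= 2 * B / L) by (apply Rdiv_le_0_compat; lra).
      destruct (mvtp G (fun x => E x + I x) t1 t2 DG) as [x [Hx Heq]]; [unfold t2; lra|].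
      specialize (HM x ltac:(lra)).
      assert (L / 2 < E x + I x) by (revert HM; unfold Rabs; destruct Rcase_abs; lra).
      destruct (HB t1 ltac:(lra)). destruct (HB t2 ltac:(unfold t2; lra)).
      assert (L / 2 * (t2 - t1) < (E x + I x) * (t2 - t1)) by (apply Rmult_lt_compat_r; unfold t2; lra).
      assert (L / 2 * (t2 - t1) = B + L / 2) by (unfold t2; field; lra).
      lra. }
  assert (HR0' : 0 <= Rinf) by (pose proof (HRinf 0 ltac:(lra)); lra).
  assert (HV0' : 0 <= Vinf) by (pose proof (HVinf 0 ltac:(lra)); lra).
  exists (- Sm), Vinf.
  split; [lra|]. split; [lra|]. split; [unfold L in HL; lra|].
  split; [exact LS'|].
  split; [|split].
  - apply is_lim_spec. simpl. intros eps.
    destruct (LEI eps) as [M HM]. exists (Rmax M 0). intros x Hx.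
    pose proof (Rmax_l M 0). pose proof (Rmax_r M 0).
    specialize (HM x ltac:(lra)). rewrite HL in HM.
    destruct (PEI x ltac:(lra)).
    rewrite Rminus_0_r, Rabs_right by lra. rewrite Rminus_0_r, Rabs_right in HM by lra. lra.
  - apply is_lim_spec. simpl. intros eps.
    destruct (LEI eps) as [M HM]. exists (Rmax M 0). intros x Hx.
    pose proof (Rmax_l M 0). pose proof (Rmax_r M 0).
    specialize (HM x ltac:(lra)). rewrite HL in HM.
    destruct (PEI x ltac:(lra)).
    rewrite Rminus_0_r, Rabs_right by lra. rewrite Rminus_0_r, Rabs_right in HM by lra. lra.
  - split; [|exact LV].
    replace (N - - Sm - Vinf) with Rinf by (unfold L in HL; lra). exact LR.
Qed.
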